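(* Let $F:\mathbb C^n\to\mathbb C^n$ be a square system of polynomials with real coefficients and let $I\in\mathbb{IC}^n$ be a strong interval approximate zero of $F$. Then there exist $x\in I$ and $Y\in\mathbb C^{n\times n}$ invertible with $K_{x,Y}(I)\subset I$ and $\sqrt2\,\lVert\mathbf 1_n-Y\cdot\square\mathrm JF(I)\rVert_\infty<1$. If additionally $\{\bar z: z\in K_{x,Y}(I)\}\subset I$ (complex conjugation taken entrywise), then the unique zero of $F$ contained in $I$ is real.
   Context: $\mathbb{IR}$ is the set of compact real intervals $[a,b]$, with operations $X\circ Y=\{x\circ y: x\in X,y\in Y\}$ for $\circ\in\{+,-,\cdot,/\}$ ($0\notin Y$ for division). $\mathbb{IC}=\{X+iY: X,Y\in\mathbb{IR}\}$ is the set of rectangular complex intervals, where $X+iY=\{x+iy:x\in X,y\in Y\}$, with operations defined for $I=X+iY$, $J=W+iZ$ by $I\pm J=(X\pm W)+i(Y\pm Z)$, $I\cdot J=(X W-YZ)+i(XZ+YW)$, $I/J=\frac{XW+YZ}{WW+ZZ}+i\frac{YW-XZ}{WW+ZZ}$. Operations on $\mathbb{IC}^n$ are componentwise; for an interval matrix $A=(A_{i,j})\in\mathbb{IC}^{n\times n}$ and $I\in\mathbb{IC}^n$, $A\cdot I:=\sum_{j=1}^n I_j\cdot(A_{1,j},\dots,A_{n,j})^T$. A point $x\in\mathbb C^n$ is identified with the degenerate interval vector $[\mathrm{Re}\,x,\mathrm{Re}\,x]+i[\mathrm{Im}\,x,\mathrm{Im}\,x]$. An interval enclosure of a map $F:\mathbb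 C^n\to\mathbb C^m$ is a map $\square F:\mathbb{IC}^n\to\mathbb{IC}^m$ with $\{F(x):x\in I\}\subseteq\square F(I)$ for all $I$; $\square F$ and $\square\mathrm JF$ denote fixed interval enclosures of $F$ and of its Jacobian $\mathrm JF$. For $A\in\mathbb{IC}^{n\times n}$, $\lVert A\rVert_\infty:=\max_{B\in A}\max_{v\ne0}\lVert Bv\rVert_\infty/\lVert v\rVert_\infty$ with $\lVert v\rVert_\infty=\max_i|v_i|$. The Krawczyk operator is $K_{x,Y}(I):=x-Y\cdot\square F(x)+(\mathbf 1_n-Y\cdot\square\mathrm JF(I))(I-x)$ for $I\in\mathbb{IC}^n$, $x\in\mathbb C^n$, $Y\in\mathbb C^{n\times n}$ invertible. $I$ is a strong interval approximate zero of $F$ if there exist $x\in I$ and invertible $Y$ with $K_{x,Y}(I)\subset I$ and $\sqrt2\,\lVert\mathbf 1_n-Y\cdot\square\mathrm JF(I)\rVert_\infty<1$; such an $I$ contains exactly one zero of $F$ (its associated zero). *)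

(* Defs.v *)
From HB Require Import structures.
From mathcomp Require Import all_boot all_order all_algebra.
From mathcomp Require Import reals.
From mathcomp Require Import complex.
From mathcomp Require Import mpoly.

Set Implicit Arguments.
Unset Strict Implicit.
Unset Printing Implicit Defensive.

Import Order.TTheory GRing.Theory Num.Theory.
Local Open Scope ring_scope.

Section IntervalArith.
Variable R : realType.
Local Notation C := R[i].

Definition itv := (R * R)%type.
Definition in_itv (x : R) (X : itv) : Prop := X.1 <= x <= X.2.

(* X o Y = {x o y : x in X, y in Y}, written by its endpoints
   (the set of all x o y for compact intervals is exactly this interval). *)
Definition itv_add (X Y : itv) : itv := (X.1 + Y.1, X.2 + Y.2).
Definition itv_sub (X Y : itv) : itv := (X.1 - Y.2, X.2 - Y.1).
Definition itv_mul (X Y : itv) : itv :=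
  (Num.min (Num.min (X.1 * Y.1) (X.1 * Y.2)) (Num.min (X.2 * Y.1) (X.2 * Y.2)),
   Num.max (Num.max (X.1 * Y.1) (X.1 * Y.2)) (Num.max (X.2 * Y.1) (X.2 * Y.2))).

Definition citv := (itv * itv)%type.
Definition in_citv (z : C) (I : citv) : Prop :=
  in_itv (complex.Re z) I.1 /\ in_itv (complex.Im z) I.2.

Definition citv_add (I J : citv) : citv := (itv_add I.1 J.1, itv_add I.2 J.2).
Definition citv_sub (I J : citv) : citv := (itv_sub I.1 J.1, itv_sub I.2 J.2).
(* (X+iY)(W+iZ) = (XW - YZ) + i(XZ + YW) *)
Definition citv_mul (I J : citv) : citv :=
  (itv_sub (itv_mul I.1 J.1) (itv_mul I.2 J.2),
   itv_add (itv_mul I.1 J.2) (itv_mul I.2 J.1)).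

Definition citv_pt (z : C) : citv :=
  ((complex.Re z, complex.Re z), (complex.Im z, complex.Im z)).

Variable n : nat.
Definition cvec := 'I_n -> C.
Definition civec := 'I_n -> citv.
Definition cimx := 'I_n -> 'I_n -> citv.

Definition in_civec (z : cvec) (I : civec) : Prop := forall i, in_citv (z i) (I i).
Definition in_cimx (B : 'M[C]_n) (A : cimx) : Prop :=
  forall i j, in_citv (B i j) (A i j).

Definition civec_sub (J I : civec) : Prop :=
  forall z, in_civec z J -> in_civec z I.

Definition civec_pt (x : cvec) : civec := fun i => citv_pt (x i).
Definition cimx_pt (Y : 'M[C]_n) : cimx := fun i j => citv_pt (Y i j).

Definition civec_add (I J : civec) : civec := fun i => citv_add (I i) (J i).
Definition civec_sub_op (I J : civec) : civec := fun i => citv_sub (I i) (J i).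

(* A . I := sum_j I_j . (A_{1j},...,A_{nj})^T  (sum computed with +, from 0) *)
Definition cimx_vec (A : cimx) (I : civec) : civec :=
  fun i => \big[citv_add/citv_pt 0]_(j < n) citv_mul (I j) (A i j).

Definition cimx_mul (A M : cimx) : cimx :=
  fun i k => cimx_vec A (fun j => M j k) i.

Definition cimx_sub (A M : cimx) : cimx := fun i j => citv_sub (A i j) (M i j).

Definition cabs (z : C) : R :=
  Num.sqrt (complex.Re z ^+ 2 + complex.Im z ^+ 2).
Definition vnorm (v : cvec) : R := \big[Num.max/0]_(i < n) cabs (v i).

Definition ratio_of (A : cimx) (r : R) : Prop :=
  exists (B : 'M[C]_n) (v : cvec), in_cimx B A /\ (exists i, v i != 0) /\
    r = vnorm (fun i => \sum_(j < n) B i j * v j) / vnorm v.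

Definition is_cimx_norm (A : cimx) (m : R) : Prop :=
  ratio_of A m /\ forall r, ratio_of A r -> r <= m.

Definition poly_eval (p : {mpoly R[n]}) (z : cvec) : C :=
  (map_mpoly (real_complex R) p).@[z].

Definition sysF (F : 'I_n -> {mpoly R[n]}) (z : cvec) : cvec :=
  fun i => poly_eval (F i) z.

Definition jacF (F : 'I_n -> {mpoly R[n]}) (z : cvec) : 'M[C]_n :=
  \matrix_(i, j) poly_eval (mderiv j (F i)) z.

Definition is_encl_F (F : 'I_n -> {mpoly R[n]}) (bF : civec -> civec) : Prop :=
  forall I z, in_civec z I -> in_civec (sysF F z) (bF I).
Definition is_encl_JF (F : 'I_n -> {mpoly R[n]}) (bJF : civec -> cimx) : Prop :=
  forall I z, in_civec z I -> in_cimx (jacF F z) (bJF I).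

Definition krawczyk_mx (bJF : civec -> cimx) (Y : 'M[C]_n) (I : civec) : cimx :=
  cimx_sub (cimx_pt 1%:M) (cimx_mul (cimx_pt Y) (bJF I)).

Definition krawczyk (bF : civec -> civec) (bJF : civec -> cimx)
    (x : cvec) (Y : 'M[C]_n) (I : civec) : civec :=
  civec_add
    (civec_sub_op (civec_pt x) (cimx_vec (cimx_pt Y) (bF (civec_pt x))))
    (cimx_vec (krawczyk_mx bJF Y I) (civec_sub_op I (civec_pt x))).

Definition krawczyk_conds (bF : civec -> civec) (bJF : civec -> cimx)
    (x : cvec) (Y : 'M[C]_n) (I : civec) : Prop :=
  [/\ in_civec x I, Y \in unitmx,
      civec_sub (krawczyk bF bJF x Y I) I &
      exists m, is_cimx_norm (krawczyk_mx bJF Y I) m /\ Num.sqrt 2 * m < 1].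

Definition strong_iaz (bF : civec -> civec) (bJF : civec -> cimx) (I : civec) : Prop :=
  exists x Y, krawczyk_conds bF bJF x Y I.

Definition conj_sub (J I : civec) : Prop :=
  forall z, in_civec z J -> in_civec (fun i => (z i)^*%C) I.

Definition is_real_vec (z : cvec) : Prop := forall i, complex.Im (z i) = 0.

End IntervalArith.

(* Main.v *)
Require Import Defs.
From HB Require Import structures.
From mathcomp Require Import all_boot all_order all_algebra.
From mathcomp Require Import reals complex mpoly.
From mathcomp Require Import polyrcf ring lra.
Import Order.TTheory GRing.Theory Num.Theory.
Local Open Scope ring_scope.
Local Open Scope complex_scope.
Set Implicit Arguments. Unset Strict Implicit.
Section S.
Variables (R : realType) (n : nat).
Local Notation C := R[i].
Lemma poly_eval_X i (z : cvec R n) : poly_eval 'X_i z = z i.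
Proof. by rewrite /poly_eval map_mpolyX mevalXU. Qed.
Lemma poly_eval_C c (z : cvec R n) : poly_eval c%:MP z = c%:C.
Proof. by rewrite /poly_eval map_mpolyC mevalC. Qed.
Lemma poly_eval_D p q (z : cvec R n) : poly_eval (p + q) z = poly_eval p z + poly_eval q z.
Proof. by rewrite /poly_eval rmorphD mevalD. Qed.
Lemma poly_eval_M p q (z : cvec R n) : poly_eval (p * q) z = poly_eval p z * poly_eval q z.
Proof. by rewrite /poly_eval rmorphM mevalM. Qed.
Lemma poly_eval_0 (z : cvec R n) : poly_eval 0 z = 0.
Proof. by rewrite -mpolyC0 poly_eval_C. Qed.
Lemma poly_eval_eq p (z w : cvec R n) : z =1 w -> poly_eval p z = poly_eval p w.
Proof. by move=> h; rewrite /poly_eval (meval_eq _ h). Qed.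

Lemma mpoly_closure (P : {mpoly R[n]} -> Prop) :
  (forall c, P c%:MP) -> (forall i, P 'X_i) ->
  (forall p q, P p -> P q -> P (p + q)) -> (forall p q, P p -> P q -> P (p * q)) ->
  forall p, P p.
Proof.
move=> hC hX hD hM; elim/mpolyind; first by rewrite -mpolyC0.
move=> c m p _ _ hp; apply: (hD) => //; rewrite -mul_mpolyC; apply: (hM) => //.
rewrite mpolyXE_id; apply: (big_ind P); [by rewrite -mpolyC1 | exact: hM | ].
move=> i _; elim: (m i) => [|k IH]; first by rewrite expr0 -mpolyC1.
by rewrite exprS; apply: (hM).
Qed.

Lemma mderivXU i j : mderiv j ('X_i : {mpoly R[n]}) = (if i == j then 1 else 0).
Proof.
rewrite mderivX mnm1E; case: eqP => [->|_]; last by rewrite scale0r.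
have -> : (U_(j) - U_(j))%MM = 0%MM by apply/mnmP=> k; rewrite mnmBE subnn mnm0E.
by rewrite mpolyX0 scale1r.
Qed.

Section Chain.
Variables (x d : cvec R n).
Definition Lpt (t : R) : cvec R n := fun k => x k + t%:C * d k.
Definition chainP (p : {mpoly R[n]}) :=
  exists (G : {poly C}) (H : 'I_n -> {poly C}),
  [/\ forall t, G.[t%:C] = poly_eval p (Lpt t),
      forall j t, (H j).[t%:C] = poly_eval (mderiv j p) (Lpt t) &
      G^`() = \sum_j d j *: H j].

Lemma chain_all p : chainP p.
Proof.
elim/mpoly_closure: p.
- move=> c; exists (c%:C)%:P, (fun _ => 0); split.
  + by move=> t; rewrite hornerC poly_eval_C.
  + by move=> j t; rewrite horner0 mderivC poly_eval_0.
  + by rewrite derivC big1 // => j _; rewrite scaler0.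
- move=> i; exists ((x i)%:P + d i *: 'X), (fun j => if i == j then 1 else 0); split.
  + by move=> t; rewrite hornerD hornerC hornerZ hornerX poly_eval_X /Lpt mulrC.
  + move=> j t; rewrite mderivXU; case: eqP => _.
      by rewrite hornerC -mpolyC1 poly_eval_C.
    by rewrite horner0 poly_eval_0.
  + rewrite derivD derivC derivZ derivX add0r (bigD1 i) //= eqxx big1 ?addr0 //.
    by move=> j /negbTE; rewrite eq_sym => ->; rewrite scaler0.
- move=> p q [Gp [Hp [h1 h2 h3]]] [Gq [Hq [k1 k2 k3]]].
  exists (Gp + Gq), (fun j => Hp j + Hq j); split.
  + by move=> t; rewrite hornerD h1 k1 poly_eval_D.
  + by move=> j t; rewrite hornerD h2 k2 mderivD poly_eval_D.
  + by rewrite derivD h3 k3 -big_split /=; apply: eq_bigr => j _; rewrite scalerDr.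
- move=> p q [Gp [Hp [h1 h2 h3]]] [Gq [Hq [k1 k2 k3]]].
  exists (Gp * Gq), (fun j => Hp j * Gq + Gp * Hq j); split.
  + by move=> t; rewrite hornerM h1 k1 poly_eval_M.
  + by move=> j t; rewrite hornerD !hornerM h1 h2 k1 k2 mderivM poly_eval_D !poly_eval_M.
  + rewrite derivM h3 k3 mulr_suml mulr_sumr -big_split /=; apply: eq_bigr => j _.
    by rewrite scalerDr scalerAl scalerAr.
Qed.
End Chain.

Lemma seg_in (I : civec R n) (x z : cvec R n) t : in_civec x I -> in_civec z I ->
  0 <= t <= 1 -> in_civec (Lpt x (fun k => z k - x k) t) I.
Proof.
move=> hx hz /andP[t0 t1] k; move: (hx k) (hz k); rewrite /Lpt.
case: (x k) => a b; case: (z k) => c e; rewrite /in_citv /in_itv /=.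
move=> [/andP[h1 h2] /andP[h3 h4]] [/andP[h5 h6] /andP[h7 h8]].
split; apply/andP; split; nra.
Qed.
End S.

Definition IN {K : numFieldType} (N : nat) (q : {poly K}) : K :=
  \sum_(k < N) q`_k / (k.+1)%:R.

Lemma IN_deriv (K : numFieldType) N (G : {poly K}) :
  (size G <= N.+1)%N -> IN N G^`() = G.[1] - G.[0].
Proof.
move=> hs; rewrite /IN (horner_coef_wide 1 hs) horner_coef0 big_ord_recl /=.
rewrite expr0 mulr1 addrC addKr; apply: eq_bigr => k _.
rewrite coef_deriv expr1n mulr1 -[G`_k.+1 *+ k.+1]mulr_natr mulfK ?pnatr_eq0 // /bump leq0n add1n.
Qed.

Lemma IN_lin (K : numFieldType) N m (c : 'I_m -> K) (Q : 'I_m -> {poly K}) :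
  IN N (\sum_j c j *: Q j) = \sum_j c j * IN N (Q j).
Proof.
rewrite /IN (eq_bigr (fun k : 'I_N => \sum_j c j * ((Q j)`_k / k.+1%:R))); last first.
  move=> k _; rewrite coef_sum mulr_suml; apply: eq_bigr => j _.
  by rewrite coefZ mulrA.
by rewrite exchange_big; apply: eq_bigr => j _; rewrite mulr_sumr.
Qed.

Lemma IN_box (R : realType) (N : nat) (r : {poly R}) lo hi : (size r <= N)%N ->
  (forall t, 0 <= t <= 1 -> lo <= r.[t] <= hi) -> lo <= IN N r <= hi.
Proof.
move=> hs hb.
pose P := \poly_(k < N.+1) (if k is k'.+1 then r`_k' / k%:R else 0).
have hP : P^`() = r.
  apply/polyP => k; rewrite coef_deriv coef_poly ltnS.
  case: ltnP => hk; first by rewrite -[_ *+ k.+1]mulr_natr divfK ?pnatr_eq0.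
  by rewrite mul0rn nth_default // (leq_trans hs hk).
have -> : IN N r = P.[1] - P.[0] by rewrite -hP IN_deriv // size_poly.
have [c hc ->] := mvt P (@ltr01 R).
rewrite hP subr0 mulr1; apply: hb; move: hc; rewrite in_itv /= => /andP[h1 h2].
by rewrite !ltW.
Qed.

Lemma IN_boxC (R : realType) (phi : R[i] -> R)
  (hD : forall a b, phi (a + b) = phi a + phi b) (h0 : phi 0 = 0)
  (hM : forall a s, phi (a * s%:C) = phi a * s) N (q : {poly R[i]}) lo hi :
  (size q <= N)%N -> (forall t, 0 <= t <= 1 -> lo <= phi q.[t%:C] <= hi) ->
  lo <= phi (IN N q) <= hi.
Proof.
move=> hs hb; pose r := \poly_(k < N) phi q`_k.
have phisum : forall (F : 'I_N -> R[i]), phi (\sum_k F k) = \sum_k phi (F k).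
  by move=> F; apply: big_morph.
have hr : forall t, phi q.[t%:C] = r.[t].
  move=> t; rewrite (horner_coef_wide _ hs) (horner_coef_wide _ (size_poly _ _)) phisum.
  by apply: eq_bigr => k _; rewrite coef_poly ltn_ord -rmorphXn hM.
have -> : phi (IN N q) = IN N r.
  rewrite /IN phisum; apply: eq_bigr => k _; rewrite coef_poly ltn_ord.
  have -> : (k.+1%:R : R[i]) = (k.+1%:R)%:C by rewrite rmorph_nat.
  by rewrite -fmorphV hM.
apply: IN_box; first exact: size_poly.
by move=> t ht; rewrite -hr; apply: hb.
Qed.

Section Itv.
Variables (R : realType).
Local Notation C := R[i].

Lemma in_itv_add (a b : R) X Y : Defs.in_itv a X -> Defs.in_itv b Y -> Defs.in_itv (a + b) (itv_add X Y).
Proof. by rewrite /Defs.in_itv => /andP[? ?] /andP[? ?]; apply/andP; split; rewrite lerD. Qed.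

Lemma in_itv_sub (a b : R) X Y : Defs.in_itv a X -> Defs.in_itv b Y -> Defs.in_itv (a - b) (itv_sub X Y).
Proof. by rewrite /Defs.in_itv => /andP[? ?] /andP[? ?]; apply/andP; split; rewrite lerB. Qed.

Lemma btw_mul (a b x y : R) : a <= x <= b ->
  Num.min (a * y) (b * y) <= x * y <= Num.max (a * y) (b * y).
Proof.
move=> /andP[h1 h2]; case: (lerP 0 y) => hy; apply/andP; split.
- by rewrite ge_min; apply/orP; left; nra.
- by rewrite le_max; apply/orP; right; nra.
- by rewrite ge_min; apply/orP; right; nra.
- by rewrite le_max; apply/orP; left; nra.
Qed.

Lemma btw_mulr (a b x y : R) : a <= y <= b ->
  Num.min (x * a) (x * b) <= x * y <= Num.max (x * a) (x * b).
Proof. by move=> h; rewrite ![x * _]mulrC; apply: btw_mul. Qed.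

Lemma btw_trans (u p q p1 p2 q1 q2 : R) :
  Num.min p q <= u <= Num.max p q -> Num.min p1 p2 <= p <= Num.max p1 p2 ->
  Num.min q1 q2 <= q <= Num.max q1 q2 ->
  Num.min (Num.min p1 p2) (Num.min q1 q2) <= u <= Num.max (Num.max p1 p2) (Num.max q1 q2).
Proof.
move=> /andP[u1 u2] /andP[r1 r2] /andP[s1 s2]; apply/andP; split.
- apply: le_trans u1; rewrite le_min; apply/andP; split; rewrite ge_min ?r1 ?s1 ?orbT //.
- apply: le_trans u2 _; rewrite ge_max; apply/andP; split; rewrite le_max ?r2 ?s2 ?orbT //.
Qed.

Lemma in_itv_mul (a b : R) X Y : Defs.in_itv a X -> Defs.in_itv b Y -> Defs.in_itv (a * b) (itv_mul X Y).
Proof.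
rewrite /Defs.in_itv /itv_mul /= => hX hY.
exact: btw_trans (btw_mul b hX) (btw_mulr X.1 hY) (btw_mulr X.2 hY).
Qed.

Lemma in_citv_add (z w : C) I J : in_citv z I -> in_citv w J -> in_citv (z + w) (citv_add I J).
Proof.
by case: z => a b; case: w => c e; rewrite /in_citv /= => -[? ?] [? ?]; split; apply: in_itv_add.
Qed.

Lemma in_citv_sub (z w : C) I J : in_citv z I -> in_citv w J -> in_citv (z - w) (citv_sub I J).
Proof.
by case: z => a b; case: w => c e; rewrite /in_citv /= => -[? ?] [? ?]; split; apply: in_itv_sub.
Qed.

Lemma in_citv_mul (z w : C) I J : in_citv z I -> in_citv w J -> in_citv (z * w) (citv_mul I J).
Proof.
case: z => a b; case: w => c e; rewrite /in_citv /= => -[? ?] [? ?]; split.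
  by apply: in_itv_sub; apply: in_itv_mul.
by apply: in_itv_add; apply: in_itv_mul.
Qed.

Lemma in_citv_pt (z : C) : in_citv z (citv_pt z).
Proof. by rewrite /in_citv /Defs.in_itv /= !lexx. Qed.

Variable n : nat.

Lemma in_citv_sum (F : 'I_n -> C) (J : 'I_n -> citv R) :
  (forall j, in_citv (F j) (J j)) ->
  in_citv (\sum_j F j) (\big[@citv_add R/citv_pt 0]_j J j).
Proof.
move=> h; apply: (big_ind2 (fun z I => in_citv z I)) => //; first exact: in_citv_pt.
by move=> *; apply: in_citv_add.
Qed.

Lemma in_cimx_vec (B : 'M[C]_n) A (v : cvec R n) J : in_cimx B A -> in_civec v J ->
  in_civec (fun i => \sum_j B i j * v j) (cimx_vec A J).
Proof.
move=> hB hv i; rewrite /cimx_vec; apply: in_citv_sum => j; rewrite mulrC.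
exact: in_citv_mul.
Qed.

Lemma in_cimx_pt (Y : 'M[C]_n) : in_cimx Y (cimx_pt Y).
Proof. by move=> i j; apply: in_citv_pt. Qed.

Lemma in_civec_pt (x : cvec R n) : in_civec x (civec_pt x).
Proof. by move=> i; apply: in_citv_pt. Qed.

Lemma ReD (a b : C) : complex.Re (a + b) = complex.Re a + complex.Re b.
Proof. by case: a => ? ?; case: b. Qed.
Lemma ImD (a b : C) : complex.Im (a + b) = complex.Im a + complex.Im b.
Proof. by case: a => ? ?; case: b. Qed.
Lemma ReM (a : C) s : complex.Re (a * s%:C) = complex.Re a * s.
Proof. by case: a => ? ? /=; rewrite mulr0 subr0. Qed.
Lemma ImM (a : C) s : complex.Im (a * s%:C) = complex.Im a * s.
Proof. by case: a => ? ? /=; rewrite mulr0 add0r. Qed.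

Lemma mvt_mx (F : 'I_n -> {mpoly R[n]}) bJF (hJF : is_encl_JF F bJF) I (x z : cvec R n) :
  in_civec x I -> in_civec z I ->
  exists M : 'M[C]_n, in_cimx M (bJF I) /\
   forall i, \sum_j M i j * (z j - x j) = poly_eval (F i) z - poly_eval (F i) x.
Proof.
move=> hx hz; pose d := fun k => z k - x k.
have := fun i => chain_all x d (F i).
move=> /fin_all_exists [G /fin_all_exists [H hH]].
pose N := (\max_i maxn (size (G i)) (\max_j size (H i j)))%N.
have hsG i : (size (G i) <= N.+1)%N.
  apply: leqW; apply: leq_trans (leq_maxl _ _) (@leq_bigmax _ (fun i => maxn (size (G i)) (\max_j size (H i j))) i).
have hsH i j : (size (H i j) <= N)%N.
  apply: leq_trans (@leq_bigmax _ (fun j => size (H i j)) j) _.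
  apply: leq_trans (leq_maxr _ _) (@leq_bigmax _ (fun i => maxn (size (G i)) (\max_j size (H i j))) i).
exists (\matrix_(i, j) IN N (H i j)); split.
- move=> i j; rewrite mxE.
  have hbox : forall t, 0 <= t <= 1 -> in_citv ((H i j).[t%:C]) (bJF I i j).
    move=> t ht; case: (hH i) => _ h2 _; rewrite h2.
    have := hJF I (Lpt x d t) (seg_in hx hz ht) i j; rewrite /jacF mxE; apply.
  split.
    by apply: (IN_boxC (@ReD) _ (@ReM) (hsH i j)) => // t /hbox [].
  by apply: (IN_boxC (@ImD) _ (@ImM) (hsH i j)) => // t /hbox [].
- move=> i; case: (hH i) => h1 _ h3.
  under eq_bigr do rewrite mxE mulrC.
  rewrite -IN_lin -h3 IN_deriv //.
  have e1 := h1 1; have e0 := h1 0; rewrite rmorph1 in e1; rewrite rmorph0 in e0.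
  rewrite e1 e0; congr (_ - _); apply: poly_eval_eq => k; rewrite /Lpt.
    by rewrite rmorph1 mul1r /d addrC subrK.
  by rewrite rmorph0 mul0r addr0.
Qed.
End Itv.

Lemma poly_eval_conj (R : realType) n (p : {mpoly R[n]}) (z : cvec R n) :
  poly_eval p (fun i => (z i)^*) = (poly_eval p z)^*.
Proof.
elim/mpoly_closure: p.
- by move=> c; rewrite !poly_eval_C conjc_real.
- by move=> i; rewrite !poly_eval_X.
- by move=> p q hp hq; rewrite !poly_eval_D hp hq rmorphD.
- by move=> p q hp hq; rewrite !poly_eval_M hp hq rmorphM.
Qed.

Lemma vnorm_ge (R : realType) n (v : cvec R n) i : cabs (v i) <= vnorm v.
Proof.
have : i \in index_enum 'I_n by rewrite mem_index_enum.
rewrite /vnorm; elim: (index_enum _) => // a s IH.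
rewrite inE big_cons /= => /orP[/eqP<-|/IH h]; rewrite le_max ?lexx // ?h ?orbT //.
Qed.

Lemma cabs_gt0 (R : realType) (w : R[i]) : w != 0 -> 0 < cabs w.
Proof.
case: w => a b hw; rewrite /cabs /= sqrtr_gt0 lt_neqAle addr_ge0 ?sqr_ge0 // andbT.
rewrite eq_sym paddr_eq0 ?sqr_ge0 // !sqrf_eq0; apply: contra hw => /andP[/eqP-> /eqP->].
by [].
Qed.

Unset Implicit Arguments.
Theorem lemma4p11 (R : realType) (n : nat) (F : 'I_n -> {mpoly R[n]})
    (bF : civec R n -> civec R n) (bJF : civec R n -> cimx R n)
    (hF : is_encl_F F bF) (hJF : is_encl_JF F bJF)
    (I : civec R n) (hI : strong_iaz bF bJF I) :
  (exists (x : cvec R n) (Y : 'M[R[i]]_n), krawczyk_conds bF bJF x Y I) /\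
  (forall (x : cvec R n) (Y : 'M[R[i]]_n),
     krawczyk_conds bF bJF x Y I ->
     conj_sub (krawczyk bF bJF x Y I) I ->
     forall z : cvec R n, in_civec z I -> sysF F z = (fun _ => 0) ->
     is_real_vec z).
Proof.
split; first exact: hI.
move=> x Y [hx hY hK [m [[hm1 hm2] hm]]] hconj z hz hFz.
have hB : forall M', in_cimx M' (bJF I) -> in_cimx (1%:M - Y *m M') (krawczyk_mx bJF Y I).
  move=> M' hM' i j; rewrite /krawczyk_mx /cimx_sub.
  have -> : (1%:M - Y *m M') i j = 1%:M i j - (Y *m M') i j by rewrite !mxE.
  apply: in_citv_sub.
    exact: in_citv_pt.
  rewrite mxE.
  exact: (in_cimx_vec (v := fun k => M' k j) (J := fun k => bJF I k j) (in_cimx_pt Y) (fun k => hM' k j) i).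
have hFz' : forall i, poly_eval (F i) z = 0 by move=> i; exact: (congr1 (fun f => f i) hFz).
have [M [hM hMd]] := mvt_mx hJF hx hz.
have hzK : in_civec z (krawczyk bF bJF x Y I).
  pose D := \col_j (z j - x j). pose FX := \col_j poly_eval (F j) x.
  have hMD : M *m D = - FX.
    apply/matrixP => i k; rewrite !mxE (ord1 k).
    under eq_bigr do rewrite mxE.
    by rewrite hMd hFz' sub0r.
  have key : forall i, z i = (x i - (Y *m FX) i 0) + ((1%:M - Y *m M) *m D) i 0.
    move=> i; rewrite mulmxBl mul1mx -mulmxA hMD mulmxN opprK !mxE.
    set a := (Y *m FX) i 0; ring.
  move=> i; rewrite key; apply: in_citv_add.
    apply: in_citv_sub; first exact: in_citv_pt.
    rewrite mxE.
    apply: (in_cimx_vec (v := fun k => FX k 0) (in_cimx_pt Y) _ i).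
    move=> k; rewrite mxE; exact: (hF _ _ (in_civec_pt x) k).
  rewrite mxE; apply: (in_cimx_vec (v := fun j => D j 0) (hB M hM) _ i).
  by move=> j; rewrite mxE; apply: in_citv_sub; [exact: hz | exact: in_citv_pt].
pose w := fun i => (z i)^*.
have hw : in_civec w I := hconj z hzK.
have hFw : forall i, poly_eval (F i) w = 0.
  by move=> i; rewrite /w poly_eval_conj hFz' conjc0.
have [M' [hM' hM'd]] := mvt_mx hJF hz hw.
pose V := \col_j (w j - z j).
have hMV : M' *m V = 0.
  apply/matrixP => i k; rewrite !mxE (ord1 k).
  under eq_bigr do rewrite mxE.
  by rewrite hM'd hFw hFz' subrr.
have hBV : (1%:M - Y *m M') *m V = V by rewrite mulmxBl mul1mx -mulmxA hMV mulmx0 subr0.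
have [hex|hnex] := boolP [exists i, w i - z i != 0].
  exfalso.
  have [i0 hi0] := existsP hex.
  have hr : ratio_of (krawczyk_mx bJF Y I)
      (vnorm (fun i => \sum_j (1%:M - Y *m M') i j * (w j - z j)) /
       vnorm (fun i => w i - z i)).
    exists (1%:M - Y *m M'), (fun i => w i - z i); split; first exact: hB.
    by split; first by exists i0.
  have := hm2 _ hr.
  have -> : vnorm (fun i => \sum_j (1%:M - Y *m M') i j * (w j - z j)) =
            vnorm (fun i => w i - z i).
    apply: eq_bigr => i _; congr cabs.
    have := congr1 (fun A : 'cV[R[i]]_n => A i 0) hBV; rewrite /= [in RHS]mxE [in LHS]mxE => <-.
    by apply: eq_bigr => j _; congr (_ * _); rewrite mxE.
  have hpos : 0 < vnorm (fun i => w i - z i).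
    exact: lt_le_trans (cabs_gt0 hi0) (vnorm_ge _ i0).
  rewrite divff ?gt_eqF // => h1.
  have hs0 : 0 <= Num.sqrt (2 : R) by apply: sqrtr_ge0.
  have hs2 : Num.sqrt (2 : R) ^+ 2 = 2 by rewrite sqr_sqrtr // ler0n.
  have hs : 1 <= Num.sqrt (2 : R) by nra.
  nra.
move=> i; move: hnex; rewrite negb_exists => /forallP /(_ i); rewrite negbK subr_eq0.
rewrite /w; case: (z i) => a b /eqP [] /=; lra.
Qed.
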